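(* Let $X$ be of $K3^{[n]}$-type, $n\ge2$, $\Lambda:=H^2(X,\mathbb{Z})$, $\alpha\in\Lambda$ a primitive isotropic class, $d:=\gcd\{(\alpha,\lambda):\lambda\in\Lambda\}$, and $Q_\alpha:=\alpha^\perp_\Lambda/\mathbb{Z}\alpha$ with the induced pairing. Let $\iota:\Lambda\hookrightarrow\widetilde{\Lambda}$ be a primitive isometric embedding in the canonical orbit $\iota_X$, $\beta:=\iota(\alpha)$, $v$ a generator of the orthogonal complement of $\iota(\Lambda)$ in $\widetilde{\Lambda}$, $\Lambda_{k3}:=\beta^\perp_{\widetilde{\Lambda}}/\mathbb{Z}\beta$ and $\bar v:=v+\mathbb{Z}\beta\in\Lambda_{k3}$. Then $Q_\alpha$ is isometric to the sublattice $\bar v^\perp$ of $\Lambda_{k3}$, and both are isometric to the orthogonal direct sum $E_8(-1)\oplus E_8(-1)\oplus U\oplus U\oplus\mathbb{Z}\lambda$ with $(\lambda,\lambda)=\frac{2-2n}{d^2}$.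
   Context: $K3^{[n]}$-type: deformation equivalent to the Hilbert scheme of $n$ points on a $K3$ surface; $\Lambda$ carries the Beauville-Bogomolov-Fujiki pairing. $U$ is the even unimodular rank $2$ lattice of signature $(1,1)$, $E_8(-1)$ the negative definite $E_8$ lattice, and the Mukai lattice $\widetilde{\Lambda}$ is $E_8(-1)^{\oplus2}\oplus U^{\oplus4}$. By a theorem of Markman, $X$ comes with a natural $O(\widetilde{\Lambda})$-orbit $\iota_X$ of primitive isometric embeddings $H^2(X,\mathbb{Z})\hookrightarrow\widetilde{\Lambda}$. *)

(* Defs.v *)
(* Lattices are represented as Z^r (row vectors 'rV[int]_r)
   equipped with a symmetric Gram matrix. *)
From HB Require Import structures.
From mathcomp Require Import all_boot all_order all_algebra.
Set Implicit Arguments. Unset Strict Implicit. Unset Printing Implicit Defensive.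
Import Order.TTheory GRing.Theory Num.Theory.
Local Open Scope ring_scope.

Definition bil (R : nzRingType) (r : nat) (G : 'M[R]_r) (x y : 'rV[R]_r) : R :=
  (x *m G *m y^T) 0 0.

Definition osum (R : nzRingType) (m k : nat) (A : 'M[R]_m) (B : 'M[R]_k)
  : 'M[R]_(m + k) := block_mx A 0 0 B.

(* Dynkin diagram of E8 (0-indexed, Bourbaki labelling) *)
Definition adjE8 (i j : nat) : bool :=
  let e a b := ((i == a) && (j == b)) || ((i == b) && (j == a)) in
  [|| e 0 2, e 2 3, e 3 4, e 4 5, e 5 6, e 6 7 | e 1 3]%N.

Definition E8m : 'M[int]_8 :=
  \matrix_(i < 8, j < 8) (if i == j then -2 else if adjE8 i j then 1 else 0).

Definition Uhyp : 'M[int]_2 := \matrix_(i < 2, j < 2) (if i == j then 0 else 1).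

(* K3^[n] lattice  E8(-1)^2 + U^3 + <2-2n>  (isometric to H^2(X,Z)) *)
Definition LK3n (n : nat) : 'M[int]_(8 + 8 + 2 + 2 + 2 + 1) :=
  osum (osum (osum (osum (osum E8m E8m) Uhyp) Uhyp) Uhyp)
       (const_mx (2 - 2 * (n%:Z))).

Definition Mukai : 'M[int]_(8 + 8 + 2 + 2 + 2 + 2) :=
  osum (osum (osum (osum (osum E8m E8m) Uhyp) Uhyp) Uhyp) Uhyp.

Definition Target (n : nat) (d : int) : 'M[rat]_(8 + 8 + 2 + 2 + 1) :=
  osum (map_mx (fun z : int => z%:~R) (osum (osum (osum E8m E8m) Uhyp) Uhyp))
       (const_mx ((2 - 2 * n%:R) / (d%:~R ^+ 2))).

Definition primitive (r : nat) (a : 'rV[int]_r) : Prop :=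
  a != 0 /\ forall (k : int) (y : 'rV[int]_r), a = k *: y -> `|k| = 1.

Definition is_gcd_pairing (r : nat) (G : 'M[int]_r) (a : 'rV[int]_r) (d : int)
  : Prop :=
  0 <= d /\ (forall l, (d %| bil G a l)%Z) /\
  (forall e : int, (forall l, (e %| bil G a l)%Z) -> (e %| d)%Z).

Definition prim_iso_emb (r s : nat) (G1 : 'M[int]_r) (G2 : 'M[int]_s)
  (M : 'M[int]_(r, s)) : Prop :=
  (forall x y : 'rV[int]_r, bil G2 (x *m M) (y *m M) = bil G1 x y) /\
  (forall x : 'rV[int]_r, x *m M = 0 -> x = 0) /\
  (forall (k : int) (y : 'rV[int]_s), k != 0 ->
     (exists x, x *m M = k *: y) -> exists x, x *m M = y).

Definition orth_gen (r s : nat) (G : 'M[int]_s) (M : 'M[int]_(r, s))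
  (v : 'rV[int]_s) : Prop :=
  (forall x : 'rV[int]_r, bil G (x *m M) v = 0) /\
  (forall w, (forall x : 'rV[int]_r, bil G (x *m M) w = 0) ->
     exists c : int, w = c *: v).

(* The quotient S / Z a (S a sublattice containing a, a isotropic, with the
   induced pairing) is isometric to the rational lattice (Z^k, T): there is a
   map f on S, additive on S, surjective, with kernel exactly Z a, carrying
   the pairing of S to that of T.  (f is the quotient map composed with the
   isometry.) *)
Definition iso_quot (r k : nat) (G : 'M[int]_r) (S : 'rV[int]_r -> Prop)
  (a : 'rV[int]_r) (T : 'M[rat]_k) : Prop :=
  exists f : 'rV[int]_r -> 'rV[int]_k,
    (forall x y, S x -> S y -> f (x + y) = f x + f y) /\
    (forall x, S x -> (f x = 0 <-> exists c : int, x = c *: a)) /\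
    (forall z, exists x, S x /\ f x = z) /\
    (forall x y, S x -> S y ->
       (bil G x y)%:~R = bil T (map_mx (fun z : int => z%:~R) (f x))
                              (map_mx (fun z : int => z%:~R) (f y))).

(* Main.v *)
Require Import Defs.
From HB Require Import structures.
From mathcomp Require Import all_boot all_order all_algebra.
From mathcomp Require Import ring lra zify.
From Stdlib Require Import ClassicalEpsilon.
Set Implicit Arguments. Unset Strict Implicit. Unset Printing Implicit Defensive.
Import Order.TTheory GRing.Theory Num.Theory.
Local Open Scope ring_scope.

Section Bil.
Variable (r : nat) (G : 'M[int]_r).
Local Notation B := (bil G).
Lemma bilDl x y z : B (x + y) z = B x z + B y z.
Proof. by rewrite /bil !mulmxDl mxE. Qed.
Lemma bilDr x y z : B x (y + z) = B x y + B x z.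
Proof. by rewrite /bil linearD /= mulmxDr mxE. Qed.
Lemma bilZl c x y : B (c *: x) y = c * B x y.
Proof. by rewrite /bil -!scalemxAl mxE. Qed.
Lemma bilZr c x y : B x (c *: y) = c * B x y.
Proof. by rewrite /bil linearZ /= -scalemxAr mxE. Qed.
Lemma bilNl x y : B (- x) y = - B x y.
Proof. by rewrite -scaleN1r bilZl mulN1r. Qed.
Lemma bilNr x y : B x (- y) = - B x y.
Proof. by rewrite -scaleN1r bilZr mulN1r. Qed.
Lemma bilBl x y z : B (x - y) z = B x z - B y z.
Proof. by rewrite bilDl bilNl. Qed.
Lemma bilBr x y z : B x (y - z) = B x y - B x z.
Proof. by rewrite bilDr bilNr. Qed.
Lemma bil0l x : B 0 x = 0.
Proof. by rewrite /bil !mul0mx mxE. Qed.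
Lemma bil0r x : B x 0 = 0.
Proof. by rewrite /bil trmx0 mulmx0 mxE. Qed.
Lemma bil_sym : G^T = G -> forall x y, B x y = B y x.
Proof.
move=> HG x y; have E : (y *m G *m x^T)^T = x *m G *m y^T.
  by rewrite !trmx_mul trmxK HG mulmxA.
by rewrite /bil -E mxE.
Qed.

Definition trv (e a : 'rV[int]_r) (h : int) (x : 'rV[int]_r) :=
  x + (B e x) *: a - (B a x + h * B e x) *: e.

Hypothesis Gs : G^T = G.
Lemma trv_iso e a h : B e e = 0 -> B e a = 0 -> B a a = 2 * h ->
  forall x y, B (trv e a h x) (trv e a h y) = B x y.
Proof.
move=> ee ea aa x y; rewrite /trv.
rewrite !(bilDl, bilDr, bilBl, bilBr, bilZl, bilZr, bilNl, bilNr).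
rewrite ?(bil_sym Gs a e) ?(bil_sym Gs x e) ?(bil_sym Gs x a) ?(bil_sym Gs y e) ?(bil_sym Gs y a) ee ea aa.
ring.
Qed.
Lemma trvK e a h : B e e = 0 -> B e a = 0 -> B a a = 2 * h ->
  cancel (trv e a h) (trv e (- a) h).
Proof.
move=> ee ea aa x; rewrite /trv.
rewrite !(bilDl, bilDr, bilBl, bilBr, bilZl, bilZr, bilNl, bilNr).
rewrite ?(bil_sym Gs a e) ee ea aa.
apply/rowP => i; rewrite !mxE; ring.
Qed.
Lemma trvD e a h x y : trv e a h (x + y) = trv e a h x + trv e a h y.
Proof.
rewrite /trv !(bilDr); apply/rowP => i; rewrite !mxE; ring.
Qed.
Lemma trvZ e a h c x : trv e a h (c *: x) = c *: trv e a h x.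
Proof.
rewrite /trv !(bilZr); apply/rowP => i; rewrite !mxE; ring.
Qed.
End Bil.

Notation VL := 'rV[int]_(8+8+2+2+2+1).
Definition mk (z1 z2 : 'rV[int]_8) (ua ub uc : 'rV[int]_2) (ze : 'rV[int]_1) : VL :=
  row_mx (row_mx (row_mx (row_mx (row_mx z1 z2) ua) ub) uc) ze.
Definition p1 (x : VL) : 'rV[int]_8 := lsubmx (lsubmx (lsubmx (lsubmx (lsubmx x)))).
Definition p2 (x : VL) : 'rV[int]_8 := rsubmx (lsubmx (lsubmx (lsubmx (lsubmx x)))).
Definition pa (x : VL) : 'rV[int]_2 := rsubmx (lsubmx (lsubmx (lsubmx x))).
Definition pb (x : VL) : 'rV[int]_2 := rsubmx (lsubmx (lsubmx x)).
Definition pc (x : VL) : 'rV[int]_2 := rsubmx (lsubmx x).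
Definition pe (x : VL) : 'rV[int]_1 := rsubmx x.

Lemma mkK x : mk (p1 x) (p2 x) (pa x) (pb x) (pc x) (pe x) = x.
Proof. by rewrite /mk /p1 /p2 /pa /pb /pc /pe !hsubmxK. Qed.
Section MkP.
Variables (z1 z2 : 'rV[int]_8) (ua ub uc : 'rV[int]_2) (ze : 'rV[int]_1).
Lemma p1_mk : p1 (mk z1 z2 ua ub uc ze) = z1. Proof. by rewrite /p1 /mk !row_mxKl. Qed.
Lemma p2_mk : p2 (mk z1 z2 ua ub uc ze) = z2. Proof. by rewrite /p2 /mk !row_mxKl row_mxKr. Qed.
Lemma pa_mk : pa (mk z1 z2 ua ub uc ze) = ua. Proof. by rewrite /pa /mk !row_mxKl row_mxKr. Qed.
Lemma pb_mk : pb (mk z1 z2 ua ub uc ze) = ub. Proof. by rewrite /pb /mk !row_mxKl row_mxKr. Qed.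
Lemma pc_mk : pc (mk z1 z2 ua ub uc ze) = uc. Proof. by rewrite /pc /mk !row_mxKl row_mxKr. Qed.
Lemma pe_mk : pe (mk z1 z2 ua ub uc ze) = ze. Proof. by rewrite /pe /mk row_mxKr. Qed.
End MkP.
Definition pmk := (p1_mk, p2_mk, pa_mk, pb_mk, pc_mk, pe_mk).

Lemma mkD z1 z2 ua ub uc ze z1' z2' ua' ub' uc' ze' :
  mk z1 z2 ua ub uc ze + mk z1' z2' ua' ub' uc' ze' =
  mk (z1 + z1') (z2 + z2') (ua + ua') (ub + ub') (uc + uc') (ze + ze').
Proof. by rewrite /mk !add_row_mx. Qed.
Lemma mkZ c z1 z2 ua ub uc ze :
  c *: mk z1 z2 ua ub uc ze = mk (c *: z1) (c *: z2) (c *: ua) (c *: ub) (c *: uc) (c *: ze).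
Proof. by rewrite /mk !scale_row_mx. Qed.
Lemma mkN z1 z2 ua ub uc ze :
  - mk z1 z2 ua ub uc ze = mk (- z1) (- z2) (- ua) (- ub) (- uc) (- ze).
Proof. by rewrite /mk !opp_row_mx. Qed.
Lemma mk0 : mk 0 0 0 0 0 0 = 0.
Proof. by rewrite /mk !row_mx0. Qed.

Lemma bil_osum (R : nzRingType) (m k : nat) (A : 'M[R]_m) (Bm : 'M[R]_k) x y :
  bil (osum A Bm) x y = bil A (lsubmx x) (lsubmx y) + bil Bm (rsubmx x) (rsubmx y).
Proof.
have H : forall x1 x2 y1 y2, bil (osum A Bm) (row_mx x1 x2) (row_mx y1 y2) =
   bil A x1 y1 + bil Bm x2 y2.
  move=> x1 x2 y1 y2.
  by rewrite /bil /osum mul_row_block !mulmx0 addr0 add0r tr_row_mx mul_row_col mxE.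
by rewrite -{1}(hsubmxK x) -{1}(hsubmxK y) H.
Qed.

Lemma bil_const (R : nzRingType) (c : R) (u w : 'rV[R]_1) :
  bil (const_mx c : 'M_1) u w = u 0 0 * c * w 0 0.
Proof. by rewrite /bil mxE big_ord1 !mxE big_ord1 !mxE. Qed.

Definition r2 (a b : int) : 'rV[int]_2 := \row_(j < 2) (if j == ord0 then a else b).
Lemma r2_0 a b : r2 a b 0 0 = a. Proof. by rewrite mxE. Qed.
Lemma r2_1 a b : r2 a b 0 1 = b. Proof. by rewrite mxE. Qed.

Lemma bilU u w : bil Uhyp u w = u 0 0 * w 0 1 + u 0 1 * w 0 0.
Proof.
rewrite /bil !mxE !big_ord_recr !big_ord0 /= !mxE !big_ord_recr !big_ord0 /= !mxE /=.
rewrite (_ : widen_ord _ _ = 0 :> 'I_2); last by apply/val_inj.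
rewrite (_ : ord_max = 1 :> 'I_2); last by apply/val_inj.
ring.
Qed.

Lemma bil_delta (r : nat) (G : 'M[int]_r) z i : bil G z (delta_mx 0 i) = (z *m G) 0 i.
Proof. by rewrite /bil trmx_delta -colE mxE. Qed.

Lemma bilLK n x y : bil (LK3n n) x y =
  bil E8m (p1 x) (p1 y) + bil E8m (p2 x) (p2 y) + bil Uhyp (pa x) (pa y) +
  bil Uhyp (pb x) (pb y) + bil Uhyp (pc x) (pc y) + pe x 0 0 * (2 - 2 * n%:Z) * pe y 0 0.
Proof. by rewrite /LK3n !bil_osum bil_const. Qed.

Lemma E8m_sym : E8m^T = E8m.
Proof.
apply/matrixP => i j; rewrite !mxE eq_sym.
by case: i => [[|[|[|[|[|[|[|[|i]]]]]]]] Hi] //; case: j => [[|[|[|[|[|[|[|[|j]]]]]]]] Hj].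
Qed.
Lemma Uhyp_sym : Uhyp^T = Uhyp.
Proof. by apply/matrixP => i j; rewrite !mxE eq_sym. Qed.
Lemma osum_sym (m k : nat) (A : 'M[int]_m) (Bm : 'M[int]_k) :
  A^T = A -> Bm^T = Bm -> (osum A Bm)^T = osum A Bm.
Proof. by move=> HA HB; rewrite /osum tr_block_mx HA HB !trmx0. Qed.
Lemma LK_sym n : (LK3n n)^T = LK3n n.
Proof.
rewrite /LK3n; apply: osum_sym; last by rewrite trmx_const.
do 3 (apply: osum_sym; last exact: Uhyp_sym).
by apply: osum_sym; exact: E8m_sym.
Qed.
Lemma Muk_sym : Mukai^T = Mukai.
Proof.
rewrite /Mukai; do 4 (apply: osum_sym; last exact: Uhyp_sym).
by apply: osum_sym; exact: E8m_sym.
Qed.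

Definition ea : VL := mk 0 0 (r2 1 0) 0 0 0.
Definition fa : VL := mk 0 0 (r2 0 1) 0 0 0.
Definition eb : VL := mk 0 0 0 (r2 1 0) 0 0.
Definition fb : VL := mk 0 0 0 (r2 0 1) 0 0.
Definition ec : VL := mk 0 0 0 0 (r2 1 0) 0.
Definition fc : VL := mk 0 0 0 0 (r2 0 1) 0.
Definition w1 (i : 'I_8) : VL := mk (delta_mx 0 i) 0 0 0 0 0.
Definition w2 (i : 'I_8) : VL := mk 0 (delta_mx 0 i) 0 0 0 0.
Definition ee : VL := mk 0 0 0 0 0 (const_mx 1).

Section Pairings.
Variable n : nat.
Local Notation B := (bil (LK3n n)).
Lemma Bsym x y : B x y = B y x.
Proof. exact: bil_sym (LK_sym n) x y. Qed.
Lemma z00 (k : nat) : (0 : 'M[int]_(1,k.+1)) 0 0 = 0. Proof. by rewrite mxE. Qed.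
Ltac pr := rewrite bilLK ?pmk ?bil0r ?bil0l ?bilU ?r2_0 ?r2_1 ?bil_delta ?mxE; ring.
Lemma pea x : B x ea = pa x 0 1. Proof. rewrite /ea. pr. Qed.
Lemma pfa x : B x fa = pa x 0 0. Proof. rewrite /fa. pr. Qed.
Lemma peb x : B x eb = pb x 0 1. Proof. rewrite /eb. pr. Qed.
Lemma pfb x : B x fb = pb x 0 0. Proof. rewrite /fb. pr. Qed.
Lemma pec x : B x ec = pc x 0 1. Proof. rewrite /ec. pr. Qed.
Lemma pfc x : B x fc = pc x 0 0. Proof. rewrite /fc. pr. Qed.
Lemma pw1 x i : B x (w1 i) = (p1 x *m E8m) 0 i. Proof. rewrite /w1. pr. Qed.
Lemma pw2 x i : B x (w2 i) = (p2 x *m E8m) 0 i. Proof. rewrite /w2. pr. Qed.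
Lemma pee x : B x ee = pe x 0 0 * (2 - 2 * n%:Z). Proof. rewrite /ee. pr. Qed.
End Pairings.

Section Algo.
Variable n : nat.
Local Notation G := (LK3n n).
Local Notation B := (bil G).

Ltac gr := rewrite ?pea ?pfa ?peb ?pfb ?pec ?pfc ?pw1 ?pw2 /ea /fa /eb /fb /ec /fc /w1 /w2
   ?pmk ?mul0mx -?rowE ?r2_0 ?r2_1 ?mxE ?eqxx //.

Lemma gfcfc : B fc fc = 0. Proof. gr. Qed.
Lemma gecec : B ec ec = 0. Proof. gr. Qed.
Lemma gecfc : B ec fc = 1. Proof. gr. Qed.
Lemma gfcec : B fc ec = 1. Proof. gr. Qed.
Lemma gebeb : B eb eb = 0. Proof. gr. Qed.
Lemma gfbfb : B fb fb = 0. Proof. gr. Qed.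
Lemma geafa : B ea fa = 1. Proof. gr. Qed.
Lemma gfaea : B fa ea = 1. Proof. gr. Qed.
Lemma gebfb : B eb fb = 1. Proof. gr. Qed.
Lemma gfbeb : B fb eb = 1. Proof. gr. Qed.
Lemma geaea : B ea ea = 0. Proof. gr. Qed.
Lemma gfafa : B fa fa = 0. Proof. gr. Qed.
Lemma gfcea : B fc ea = 0. Proof. gr. Qed.
Lemma gfcfa : B fc fa = 0. Proof. gr. Qed.
Lemma gfceb : B fc eb = 0. Proof. gr. Qed.
Lemma gfcfb : B fc fb = 0. Proof. gr. Qed.
Lemma geaec : B ea ec = 0. Proof. gr. Qed.
Lemma gfaec : B fa ec = 0. Proof. gr. Qed.
Lemma gebec : B eb ec = 0. Proof. gr. Qed.
Lemma gfbec : B fb ec = 0. Proof. gr. Qed.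
Lemma gebfc : B eb fc = 0. Proof. gr. Qed.
Lemma gfbfc : B fb fc = 0. Proof. gr. Qed.
Lemma gecfb : B ec fb = 0. Proof. gr. Qed.
Lemma geceb : B ec eb = 0. Proof. gr. Qed.
Lemma gw1w1 i : B (w1 i) (w1 i) = -2. Proof. gr. Qed.
Lemma gw2w2 i : B (w2 i) (w2 i) = -2. Proof. gr. Qed.
Lemma gfbw1 i : B fb (w1 i) = 0. Proof. gr. Qed.
Lemma gfbw2 i : B fb (w2 i) = 0. Proof. gr. Qed.
Lemma gw1fc i : B (w1 i) fc = 0. Proof. gr. Qed.
Lemma gw2fc i : B (w2 i) fc = 0. Proof. gr. Qed.
Lemma gw1eb i : B (w1 i) eb = 0. Proof. gr. Qed.
Lemma gw2eb i : B (w2 i) eb = 0. Proof. gr. Qed.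
End Algo.

Section Red.
Variable n : nat.
Local Notation G := (LK3n n).
Local Notation B := (bil G).

Definition isoG (g : VL -> VL) : Prop :=
  [/\ forall x y, B (g x) (g y) = B x y, forall x y, g (x + y) = g x + g y,
      forall (c : int) x, g (c *: x) = c *: g x & exists h, cancel g h /\ cancel h g].

Lemma isoG_id : isoG id.
Proof. by split => //; exists id. Qed.

Lemma isoG_comp g1 g2 : isoG g1 -> isoG g2 -> isoG (g2 \o g1).
Proof.
case=> i1 a1 s1 [h1 [c1 c1']] [i2 a2 s2 [h2 [c2 c2']]]; split => /=.
- by move=> x y; rewrite i2 i1.
- by move=> x y; rewrite a1 a2.
- by move=> c x; rewrite s1 s2.
- exists (h1 \o h2); split => x /=; first by rewrite c2 c1.
  by rewrite c1' c2'.
Qed.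

Lemma isoG_trv e a h : B e e = 0 -> B e a = 0 -> B a a = 2 * h ->
  isoG (trv G e a h).
Proof.
move=> Hee Hea Haa; split.
- move=> x y; apply: (trv_iso (LK_sym n) Hee Hea Haa).
- exact: trvD.
- exact: trvZ.
- exists (trv G e (- a) h); split.
    move=> x; exact: (@trvK _ G (LK_sym n) e a h Hee Hea Haa x).
  have K := @trvK _ G (LK_sym n) e (- a) h Hee.
  rewrite bilNr Hea oppr0 bilNl bilNr opprK Haa in K.
  move=> x; have := K erefl erefl x.
  by rewrite opprK.
Qed.

Lemma trv_pair e a h x u :
  B (trv G e a h x) u = B x u + B e x * B a u - (B a x + h * B e x) * B e u.
Proof. by rewrite /trv bilBl bilDl !bilZl. Qed.

Definition kap x := B x fc.

Definition term x :=
  [&& (kap x %| B x ea)%Z, (kap x %| B x fa)%Z, (kap x %| B x eb)%Z,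
      (kap x %| B x fb)%Z, (kap x %| B x ec)%Z,
      [forall i, (kap x %| B x (w1 i))%Z] & [forall i, (kap x %| B x (w2 i))%Z]].

Lemma stepA u u' x : B u u = 0 -> B u' u' = 0 -> B u' u = 1 -> B fc u' = 0 ->
  B fc u = 0 -> B u ec = 0 ->
  exists g, isoG g /\ kap (g x) = (B x u %% kap x)%Z.
Proof.
move=> Huu Hu'u' Hu'u Hfcu' Hfcu Huec.
set k := kap x; set j := - ((B x u %/ k)%Z + 1).
set g1 := trv G fc (j *: u') 0; set g2 := trv G u ec 0.
have i1 : isoG g1.
  by apply: isoG_trv; rewrite ?gfcfc ?bilZr ?bilZl ?Hfcu' ?Hu'u' ?mulr0.
have i2 : isoG g2 by apply: isoG_trv; rewrite ?Huu ?Huec ?gecec ?mulr0.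
exists (g2 \o g1); split; first exact: isoG_comp.
rewrite /= /kap /g2 trv_pair gecfc (Bsym n u fc) Hfcu.
rewrite (Bsym n u (g1 x)) /g1 !trv_pair !bilZl (Bsym n u' fc) Hfcu' Hu'u gfcfc Hfcu (Bsym n fc x).
rewrite -/(kap x) -/k /j.
move: (divz_eq (B x u) k); set q := (B x u %/ k)%Z; set r := (B x u %% k)%Z => E.
rewrite E; ring.
Qed.

Lemma stepB x : (kap x %| B x fb)%Z -> (kap x %| B x eb)%Z -> ~~ (kap x %| B x ec)%Z ->
  exists g, isoG g /\ kap (g x) = kap x /\ ~~ (kap x %| B (g x) eb)%Z.
Proof.
move=> Hfb Heb Hec.
set k := kap x; set j := - (B x fb %/ k)%Z.
set g1 := trv G fc (j *: eb) 0; set g2 := trv G fb ec 0.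
have i1 : isoG g1.
  by apply: isoG_trv; rewrite ?gfcfc ?bilZr ?bilZl ?gfceb ?gebeb ?mulr0.
have i2 : isoG g2 by apply: isoG_trv; rewrite ?gfbfb ?gfbec ?gecec ?mulr0.
have k1 : kap (g1 x) = k.
  by rewrite /kap /g1 trv_pair !bilZl gebfc gfcfc; ring.
have fb1 : B (g1 x) fb = 0.
  rewrite /g1 trv_pair !bilZl gebfb gfcfb (Bsym n fc x) -/(kap x) -/k /j.
  move: (divzK Hfb); rewrite -/k; set q := (B x fb %/ k)%Z => E.
  by rewrite -{1}E; ring.
have eb1 : B (g1 x) eb = B x eb.
  by rewrite /g1 trv_pair !bilZl gebeb gfceb; ring.
have ec1 : B (g1 x) ec = B x ec - j * B x eb.
  by rewrite /g1 trv_pair !bilZl gebec gfcec (Bsym n eb x); ring.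
exists (g2 \o g1); split; first exact: isoG_comp.
split.
  by rewrite /= /kap /g2 trv_pair gfbfc gecfc (Bsym n fb) fb1 -/(kap (g1 x)) k1; ring.
rewrite /= /g2 trv_pair gfbeb geceb (Bsym n fb) (Bsym n ec) fb1 eb1 ec1.
apply: contra Hec => H.
have -> : B x ec = B x eb + j * B x eb - (B x eb + 0 * 0 - (B x ec - j * B x eb + 0 * 0) * 1).
  ring.
by rewrite rpredB // rpredD // dvdz_mull.
Qed.

Lemma stepC w x : B w w = -2 -> B fb w = 0 -> B w fc = 0 -> B w eb = 0 ->
  (kap x %| B x fb)%Z -> (kap x %| B x eb)%Z -> ~~ (kap x %| B x w)%Z ->
  exists g, isoG g /\ kap (g x) = kap x /\ ~~ (kap x %| B (g x) eb)%Z.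
Proof.
move=> Hww Hfbw Hwfc Hweb Hfb Heb Hw.
set g := trv G fb w (-1).
have i : isoG g by apply: isoG_trv; rewrite ?gfbfb ?Hfbw ?Hww.
exists g; split => //; split.
  by rewrite /kap /g trv_pair Hwfc gfbfc; ring.
rewrite /g trv_pair Hweb gfbeb.
apply: contra Hw => H.
have -> : B x w = B x eb + B x fb - (B x eb + B fb x * 0 - (B w x + -1 * B fb x) * 1).
  rewrite (Bsym n w x) (Bsym n fb x); ring.
by rewrite rpredB // rpredD.
Qed.

Lemma prog x : ~~ term x ->
  exists g s, isoG g /\ ~~ (kap x %| s)%Z /\ kap (g x) = (s %% kap x)%Z.
Proof.
move=> Ht.
have SA : forall u u', B u u = 0 -> B u' u' = 0 -> B u' u = 1 -> B fc u' = 0 ->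
  B fc u = 0 -> B u ec = 0 -> ~~ (kap x %| B x u)%Z ->
  exists g s, isoG g /\ ~~ (kap x %| s)%Z /\ kap (g x) = (s %% kap x)%Z.
  move=> u u' h1 h2 h3 h4 h5 h6 h7.
  have [g [ig kg]] := stepA x h1 h2 h3 h4 h5 h6.
  by exists g, (B x u).
have SB : forall y g1, isoG g1 -> kap (g1 y) = kap y ->
    ~~ (kap y %| B (g1 y) eb)%Z ->
    exists g s, isoG g /\ ~~ (kap y %| s)%Z /\ kap (g y) = (s %% kap y)%Z.
  move=> y g1 ig1 k1 H.
  have [g2 [ig2 kg2]] := stepA (g1 y) (gebeb n) (gfbfb n) (gfbeb n) (gfcfb n) (gfceb n) (gebec n).
  exists (g2 \o g1), (B (g1 y) eb); split; first exact: isoG_comp.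
  by rewrite /= kg2 k1.
case Hfb: (kap x %| B x fb)%Z; last first.
  by apply: (SA fb eb); rewrite ?gfbfb ?gebeb ?gebfb ?gfceb ?gfcfb ?gfbec ?Hfb.
case Heb: (kap x %| B x eb)%Z; last first.
  by apply: (SA eb fb); rewrite ?gfbfb ?gebeb ?gfbeb ?gfceb ?gfcfb ?gebec ?Heb.
case Hea: (kap x %| B x ea)%Z; last first.
  by apply: (SA ea fa); rewrite ?geaea ?gfafa ?gfaea ?gfcea ?gfcfa ?geaec ?Hea.
case Hfa: (kap x %| B x fa)%Z; last first.
  by apply: (SA fa ea); rewrite ?geaea ?gfafa ?geafa ?gfcea ?gfcfa ?gfaec ?Hfa.
case Hec: (kap x %| B x ec)%Z; last first.
  have [g1 [ig1 [k1 H]]] := stepB Hfb Heb (negbT Hec).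
  exact: SB ig1 k1 H.
case H1: [forall i, (kap x %| B x (w1 i))%Z]; last first.
  move/negbT: H1; rewrite negb_forall => /existsP [i Hi].
  have [g1 [ig1 [k1 H]]] := stepC (gw1w1 n i) (gfbw1 n i) (gw1fc n i) (gw1eb n i) Hfb Heb Hi.
  exact: SB ig1 k1 H.
case H2: [forall i, (kap x %| B x (w2 i))%Z]; last first.
  move/negbT: H2; rewrite negb_forall => /existsP [i Hi].
  have [g1 [ig1 [k1 H]]] := stepC (gw2w2 n i) (gfbw2 n i) (gw2fc n i) (gw2eb n i) Hfb Heb Hi.
  exact: SB ig1 k1 H.
by move: Ht; rewrite /term Hfb Heb Hea Hfa Hec H1 H2.
Qed.

Lemma main N : forall x, kap x != 0 -> (absz (kap x) <= N)%N ->
  exists g, isoG g /\ term (g x).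
Proof.
elim: N => [|N IH] x kx0 kN.
  by move: kx0; rewrite -absz_eq0; move: kN; rewrite leqn0 => ->.
case Ht: (term x); first by exists id; split; [exact: isoG_id|].
have [g [s [ig [ns ks]]]] := prog (negbT Ht).
have r0 : (s %% kap x)%Z != 0.
  by apply: contra ns => /eqP H; apply/dvdz_mod0P.
have rlt : (absz (s %% kap x)%Z < absz (kap x))%N.
  have := ltz_mod s kx0; have := modz_ge0 s kx0.
  by move=> h1 h2; rewrite -ltz_nat !abszE ger0_norm.
have h1 : kap (g x) != 0 by rewrite ks.
have h2 : (absz (kap (g x)) <= N)%N by rewrite ks -ltnS (leq_trans rlt kN).
have [g' [ig' tg']] := IH (g x) h1 h2.
by exists (g' \o g); split; [exact: isoG_comp|].
Qed.

Lemma reduce x : exists g, isoG g /\ term (g x).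
Proof.
case Ht: (term x); first by exists id; split; [exact: isoG_id|].
case: (eqVneq (kap x) 0) => kx; last first.
  exact: (main kx (leqnn _)).
have [g [s [ig [ns ks]]]] := prog (negbT Ht).
have k0 : kap (g x) != 0.
  by rewrite ks kx modz0; apply: contra ns => /eqP ->; rewrite dvdz0.
have [g' [ig' tg']] := main k0 (leqnn _).
by exists (g' \o g); split; [exact: isoG_comp|].
Qed.
End Red.

Definition E8inv : 'M[int]_8 := \matrix_(i < 8, j < 8)
  - (nth 0 (nth [::] [:: [:: 4;5;7;10;8;6;4;2]; [::5;8;10;15;12;9;6;3]; [::7;10;14;20;16;12;8;4];
  [::10;15;20;30;24;18;12;6]; [::8;12;16;24;20;15;10;5]; [::6;9;12;18;15;12;8;4];
  [::4;6;8;12;10;8;6;3]; [::2;3;4;6;5;4;3;2]] i) j)%:Z.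
Lemma E8invK : E8m *m E8inv = 1%:M.
Proof.
apply/matrixP => i j; rewrite !mxE big_ord_recr /=.
rewrite !big_ord_recr big_ord0 /= !mxE.
by case: i => [[|[|[|[|[|[|[|[|i]]]]]]]] Hi] //; case: j => [[|[|[|[|[|[|[|[|j]]]]]]]] Hj].
Qed.

Lemma E8even q : (2 %| bil E8m q q)%Z.
Proof.
rewrite (row_sum_delta q).
apply: (big_rec (fun s => (2 %| bil E8m s s)%Z)); first by rewrite bil0l.
move=> j s _ Hs.
rewrite !(bilDl, bilDr, bilZl, bilZr) (bil_sym E8m_sym s) bil_delta -rowE !mxE eqxx.
have -> : q 0 j * (q 0 j * -2 + bil E8m (delta_mx 0 j) s) +
   (q 0 j * bil E8m (delta_mx 0 j) s + bil E8m s s) =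
   2 * (q 0 j * bil E8m (delta_mx 0 j) s - q 0 j * q 0 j) + bil E8m s s by ring.
by rewrite rpredD // dvdz_mulr.
Qed.

Definition divrow (k : int) (m : nat) (z : 'rV[int]_m) : 'rV[int]_m :=
  \row_j divz (z 0 j) k.
Lemma divrowK k m (z : 'rV[int]_m) : (forall j, (k %| z ord0 j)%Z) -> k *: divrow k z = z.
Proof. by move=> H; apply/rowP => j; rewrite !mxE mulrC divzK. Qed.

Lemma r20 : r2 0 0 = 0.
Proof. by apply/rowP => j; rewrite !mxE; case: ifP. Qed.

Lemma lin_p1 : {morph p1 : x y / x + y}. Proof. by move=> x y; rewrite /p1 !linearD. Qed.

Section Final.
Variable n : nat.
Local Notation G := (LK3n n).
Local Notation B := (bil G).

Lemma normal y : term n y -> exists T m c, isoG n T /\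
  T y = mk 0 0 0 0 (r2 m (m * c)) (pe y).
Proof.
move=> /and3P [Hea Hfa /and5P [Heb Hfb Hec /forallP H1 /forallP H2]].
set k := kap n y in Hea Hfa Heb Hfb Hec H1 H2.
have Hk : pc y 0 0 = k by rewrite /k /kap pfc.
set q1 := divrow k (p1 y *m E8m) *m E8inv.
set q2 := divrow k (p2 y *m E8m) *m E8inv.
set qa := divrow k (pa y); set qb := divrow k (pb y); set qc := divrow k (pc y).
have e1 : p1 y = k *: q1.
  rewrite /q1 scalemxAl divrowK; first by rewrite -mulmxA E8invK mulmx1.
  by move=> j; rewrite -(pw1 n).
have e2 : p2 y = k *: q2.
  rewrite /q2 scalemxAl divrowK; first by rewrite -mulmxA E8invK mulmx1.
  by move=> j; rewrite -(pw2 n).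
have ea' : pa y = k *: qa.
  rewrite divrowK // => j; case: j => [[|[|j]] Hj] //.
    by rewrite (_ : Ordinal Hj = 0) -?(pfa n) //; apply/val_inj.
  by rewrite (_ : Ordinal Hj = 1) -?(pea n) //; apply/val_inj.
have eb' : pb y = k *: qb.
  rewrite divrowK // => j; case: j => [[|[|j]] Hj] //.
    by rewrite (_ : Ordinal Hj = 0) -?(pfb n) //; apply/val_inj.
  by rewrite (_ : Ordinal Hj = 1) -?(peb n) //; apply/val_inj.
have ec' : pc y = k *: qc.
  rewrite divrowK // => j; case: j => [[|[|j]] Hj] //.
    by rewrite (_ : Ordinal Hj = 0) -?Hk ?dvdzz //; apply/val_inj.
  by rewrite (_ : Ordinal Hj = 1) -?(pec n) //; apply/val_inj.
set l := mk q1 q2 qa qb qc 0.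
set E := mk 0 0 0 0 0 (pe y).
have ey : y = k *: l + E.
  by rewrite -{1}(mkK y) /l /E mkZ mkD e1 e2 ea' eb' ec' !addr0 scaler0 add0r.
case: (eqVneq k 0) => k0.
  exists id, 0, 0; split; first exact: isoG_id.
  by rewrite /= mul0r r20 {1}ey k0 scale0r add0r.
have bilUU : forall u : 'rV[int]_2, bil Uhyp u u = 2 * (u 0 0 * u 0 1).
  by move=> u; rewrite bilU; ring.
set a := mk (-q1) (-q2) (-qa) (-qb) 0 0.
have aa : B a a = 2 * (B a a %/ 2)%Z.
  have : (2 %| B a a)%Z.
    rewrite bilLK !pmk !bilUU ?bil0r !mxE ?mul0r ?mulr0 ?addr0.
    by rewrite !rpredD ?E8even ?dvdz_mulr.
  by move=> H; rewrite mulrC divzK.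
set h := (B a a %/ 2)%Z.
have fca : B fc a = 0 by rewrite (Bsym n) pfc /a pc_mk mxE.
have iT : isoG n (trv G fc a h) by apply: isoG_trv; rewrite ?(gfcfc n).
have TE : trv G fc a h E = E.
  rewrite /trv; have -> : B fc E = 0 by rewrite (Bsym n) pfc /E pc_mk mxE.
  have -> : B a E = 0.
    by rewrite /a /E bilLK !pmk !bil0r !mxE !mul0r !addr0.
  by rewrite scale0r addr0 mulr0 addr0 scale0r subr0.
have lfc : B fc l = 1.
  by rewrite (Bsym n) pfc /l pc_mk /qc mxE Hk divzz k0.
have Tl : trv G fc a h l = mk 0 0 0 0 (qc - (B a l + h) *: r2 0 1) 0.
  rewrite /trv lfc scale1r mulr1 /l /a /fc mkD mkZ !scaler0 mkN mkD !subrr !oppr0 !addr0.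
  by [].
exists (trv G fc a h), k, (qc 0 1 - (B a l + h)); split => //.
rewrite {1}ey trvD trvZ TE Tl /E mkZ mkD !scaler0 !addr0 !add0r.
congr (mk _ _ _ _ _ _).
have qc0 : qc 0 0 = 1 by rewrite /qc mxE Hk divzz k0.
have L0 : forall (u : 'rV[int]_2) (t : int), (k *: (u - t *: r2 0 1)) 0 0 = k * u 0 0.
  by move=> u t; rewrite !mxE /=; ring.
have L1 : forall (u : 'rV[int]_2) (t : int), (k *: (u - t *: r2 0 1)) 0 1 = k * (u 0 1 - t).
  by move=> u t; rewrite !mxE /=; ring.
apply/rowP => j; case: j => [[|[|j]] Hj] //=.
  rewrite (_ : Ordinal Hj = 0); last by apply/val_inj.
  by rewrite L0 qc0 r2_0 mulr1.
rewrite (_ : Ordinal Hj = 1); last by apply/val_inj.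
by rewrite L1 r2_1.
Qed.
End Final.

Lemma Wid (m c kk e x0 x1 xe y0 y1 ye : rat) : m != 0 -> 2 * m * m * c + e * kk * kk = 0 ->
  m * x1 + m * c * x0 + kk * e * xe = 0 -> m * y1 + m * c * y0 + kk * e * ye = 0 ->
  x0 * y1 + x1 * y0 + xe * e * ye = (e / (m ^+ 2)) * (kk * x0 - m * xe) * (kk * y0 - m * ye).
Proof.
move=> m0 hc hx hy.
have ec : c = - e * kk * kk / (2 * m * m).
  have two0 : (2 : rat) != 0 by [].
  have mm : 2 * m * m != 0 by rewrite !mulf_neq0.
  by apply: (mulfI mm); rewrite [in RHS]mulrC divfK //; lra.
have ex : x1 = (- e * kk * xe - m * c * x0) / m.
  by apply: (mulfI m0); rewrite [in RHS]mulrC divfK //; lra.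
have ey : y1 = (- e * kk * ye - m * c * y0) / m.
  by apply: (mulfI m0); rewrite [in RHS]mulrC divfK //; lra.
rewrite ex ey ec; field; exact: m0.
Qed.

Lemma bil_map (r : nat) (G : 'M[int]_r) x y :
  bil (map_mx (fun z : int => z%:~R) G) (map_mx (fun z : int => z%:~R) x)
      (map_mx (fun z : int => z%:~R) y) = (bil G x y)%:~R :> rat.
Proof. by rewrite /bil map_trmx -!map_mxM mxE. Qed.

Lemma constD (a b : int) : const_mx (a + b) = const_mx a + const_mx b :> 'rV[int]_1.
Proof. by apply/matrixP => i j; rewrite !mxE. Qed.
Lemma constZ (a b : int) : const_mx (a * b) = a *: const_mx b :> 'rV[int]_1.
Proof. by apply/matrixP => i j; rewrite !mxE. Qed.
Lemma const00 (u : 'rV[int]_1) : u = const_mx (u 0 0).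
Proof. by apply/matrixP => i j; rewrite !mxE !ord1. Qed.

Section P1.
Variables (n : nat) (m c kk : int).
Hypotheses (n2 : (2 <= n)%N) (m0 : m != 0) (cop : coprimez m kk)
  (hc : m * m * c = (n%:Z - 1) * kk * kk).
Local Notation G := (LK3n n).
Local Notation B := (bil G).
Definition a0 := mk 0 0 0 0 (r2 m (m * c)) (const_mx kk).

Lemma Ba0 y : B a0 y = m * pc y 0 1 + m * c * pc y 0 0 + kk * (2 - 2 * n%:Z) * pe y 0 0.
Proof.
have E : (const_mx kk : 'rV[int]_1) 0 0 = kk by rewrite mxE.
by rewrite /a0 bilLK !pmk !bil0l bilU r2_0 r2_1 E !add0r.
Qed.

Definition f0 (y : VL) : 'rV[int]_(8 + 8 + 2 + 2 + 1) :=
  row_mx (row_mx (row_mx (row_mx (p1 y) (p2 y)) (pa y)) (pb y))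
    (const_mx (kk * pc y 0 0 - m * pe y 0 0)).

Lemma f0D x y : f0 (x + y) = f0 x + f0 y.
Proof.
rewrite /f0 !add_row_mx -constD /p1 /p2 /pa /pb /pc /pe !linearD /= !mxE.
by congr (row_mx _ (const_mx _)); ring.
Qed.
Lemma f0Z (j : int) x : f0 (j *: x) = j *: f0 x.
Proof.
rewrite /f0 !scale_row_mx -constZ /p1 /p2 /pa /pb /pc /pe !linearZ /= !mxE.
by congr (row_mx _ (const_mx _)); ring.
Qed.

Lemma f0a0 : f0 a0 = 0.
Proof.
rewrite /f0 /a0 !pmk r2_0 mxE.
have -> : kk * m - m * kk = 0 by ring.
have -> : const_mx 0 = 0 :> 'rV[int]_1 by apply/matrixP => i j; rewrite !mxE.
by rewrite !row_mx0.
Qed.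

Lemma f0_ker y : B a0 y = 0 -> f0 y = 0 -> exists j, y = j *: a0.
Proof.
move=> hy H.
move: H; rewrite /f0 -[0 : 'rV[int]_(8+8+2+2+1)]row_mx0 => /eq_row_mx [H1 H2].
move: H1; rewrite -[0 : 'rV[int]_(8+8+2+2)]row_mx0 => /eq_row_mx [H1 Hb].
move: H1; rewrite -[0 : 'rV[int]_(8+8+2)]row_mx0 => /eq_row_mx [H1 Ha].
move: H1; rewrite -[0 : 'rV[int]_(8+8)]row_mx0 => /eq_row_mx [H1' H2'].
have Hs : kk * pc y 0 0 - m * pe y 0 0 = 0.
  have := congr1 (fun u : 'rV[int]_1 => u 0 0) H2.
  by rewrite /= [in X in X = _ -> _]mxE [in X in _ = X -> _]mxE.
have Hkm : kk * pc y 0 0 = m * pe y 0 0 by apply/eqP; rewrite -subr_eq0 Hs.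
have Hd : (kk * pc y 0 0) \in dvdz m.
  rewrite Hkm; exact: dvdz_mulr (dvdzz m).
rewrite Gauss_dvdzr // in Hd.
case/dvdzP: Hd => j Hj.
have He : pe y 0 0 = j * kk.
  apply: (mulfI m0); rewrite -Hkm Hj; ring.
have Hc : pc y 0 1 = m * c * j.
  apply: (mulfI m0).
  have hy' := hy; rewrite Ba0 Hj He in hy'.
  apply/eqP; rewrite -subr_eq0; apply/eqP.
  transitivity ((m * pc y 0 1 + m * c * (j * m) + kk * (2 - 2 * n%:Z) * (j * kk))
     - 2 * j * (m * m * c - (n%:Z - 1) * kk * kk)); first ring.
  by rewrite hy' hc subrr mulr0 subr0.
exists j; rewrite -(mkK y) /a0 mkZ !scaler0 H1' H2' Ha Hb.
congr mk.
  apply/rowP => i; case: i => [[|[|i]] Hi] //=.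
    rewrite (_ : Ordinal Hi = 0); last by apply/val_inj.
    by rewrite [RHS]mxE r2_0 Hj mulrC.
  rewrite (_ : Ordinal Hi = 1); last by apply/val_inj.
  by rewrite [RHS]mxE r2_1 Hc; ring.
by apply/rowP => i; rewrite ord1 [RHS]mxE [X in _ * X]mxE He.
Qed.

Lemma f0_surj z : exists y, B a0 y = 0 /\ f0 y = z.
Proof.
have g1 : gcdz m kk = 1 by apply/eqP.
have [u [v huv]] := Bezoutz m kk; rewrite g1 in huv.
have dt : (m %| n%:Z - 1)%Z.
  have : (m %| (n%:Z - 1) * kk * kk)%Z by rewrite -hc -mulrA dvdz_mulr.
  by rewrite Gauss_dvdzl // Gauss_dvdzl.
set t := ((n%:Z - 1) %/ m)%Z.
have ht : t * m = n%:Z - 1 by rewrite divzK.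
rewrite -(hsubmxK z) -(hsubmxK (lsubmx z)) -(hsubmxK (lsubmx (lsubmx z))).
rewrite -(hsubmxK (lsubmx (lsubmx (lsubmx z)))).
set z1 := lsubmx _; set z2 := rsubmx (lsubmx (lsubmx (lsubmx z))).
set za := rsubmx (lsubmx (lsubmx z)); set zb := rsubmx (lsubmx z).
set zl := rsubmx z.
set s := zl 0 0.
set p := v * s; set r := - (u * s).
exists (mk z1 z2 za zb (r2 p (- c * p + 2 * t * kk * r)) (const_mx r)).
split.
  rewrite Ba0 !pmk r2_0 r2_1 mxE.
  transitivity (2 * kk * r * (t * m - (n%:Z - 1))); first ring.
  by rewrite ht subrr mulr0.
rewrite /f0 !pmk r2_0 mxE (const00 zl) -/s.
congr (row_mx _ (const_mx _)).
rewrite /p /r; transitivity ((u * m + v * kk) * s); first ring.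
by rewrite huv mul1r.
Qed.

Lemma f0_pair x y : B a0 x = 0 -> B a0 y = 0 ->
  (B x y)%:~R = bil (Target n m) (map_mx (fun z : int => z%:~R) (f0 x))
                                 (map_mx (fun z : int => z%:~R) (f0 y)).
Proof.
move=> hx hy.
rewrite bilLK /Target bil_osum -!map_lsubmx -!map_rsubmx /f0 !row_mxKl !row_mxKr bil_map.
rewrite !bil_osum !row_mxKl !row_mxKr bil_const.
rewrite -(addrA _ (bil Uhyp (pc x) (pc y))) intrD; congr (_ + _).
have cK : forall a : int, (map_mx (fun z : int => z%:~R : rat) (const_mx a : 'rV[int]_1)) 0 0 = a%:~R.
  by move=> a; rewrite map_const_mx mxE.
rewrite !cK.
rewrite Ba0 in hx; rewrite Ba0 in hy.
have hx' := congr1 (fun z : int => z%:~R : rat) hx.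
have hy' := congr1 (fun z : int => z%:~R : rat) hy.
have hc' := congr1 (fun z : int => z%:~R : rat) hc.
have e2 : ((2 - 2 * n%:Z)%:~R : rat) = 2 - 2 * n%:R by rewrite intrB intrM.
rewrite /= !(e2, intrD, intrM, intrB) in hx' hy'.
rewrite /= !(intrD, intrM, intrB) in hc'.
have m0' : (m%:~R : rat) != 0 by rewrite intr_eq0.
rewrite bilU !(e2, intrD, intrM, intrB).
rewrite (Wid m0' _ hx' hy').
  by rewrite !mulrA; ring.
have e1 : ((-1 : int)%:~R : rat) = -1 by [].
have en : ((n%:Z)%:~R : rat) = n%:R by [].
rewrite e1 en in hc'.
have -> : 2 * (m%:~R : rat) * m%:~R * c%:~R = 2 * (m%:~R * m%:~R * c%:~R) by ring.
rewrite hc'; ring.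
Qed.
End P1.

Section P1G.
Variable n : nat.
Local Notation G := (LK3n n).
Local Notation B := (bil G).

Lemma isoG_inv g : isoG n g -> exists h, isoG n h /\ cancel g h /\ cancel h g.
Proof.
case=> ib ad sc [h [gh hg]]; exists h; split => //; split.
- by move=> x y; rewrite -ib !hg.
- by move=> x y; apply: (can_inj gh); rewrite ad !hg.
- by move=> c x; apply: (can_inj gh); rewrite sc !hg.
- by exists g.
Qed.

Lemma nf x : exists g m c, isoG n g /\ g x = mk 0 0 0 0 (r2 m (m * c)) (pe (g x)).
Proof.
have [g1 [ig1 t1]] := reduce n x.
have [T [m [c [iT E]]]] := normal t1.
exists (T \o g1), m, c; split; first exact: isoG_comp.
by rewrite /= E pmk.
Qed.
End P1G.

Lemma r2Z (j a b : int) : j *: r2 a b = r2 (j * a) (j * b).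
Proof. by apply/rowP => i; rewrite !mxE; case: ifP. Qed.

Theorem part1 n alpha d : (2 <= n)%N -> primitive alpha ->
  bil (LK3n n) alpha alpha = 0 -> is_gcd_pairing (LK3n n) alpha d ->
  iso_quot (LK3n n) (fun x => bil (LK3n n) alpha x = 0) alpha (Target n d).
Proof.
move=> n2 [anz aprim] aiso [d0 [dd dmax]].
have [g [m [c [ig Eg]]]] := nf n alpha.
set kk := pe (g alpha) 0 0.
have Ea : g alpha = a0 m c kk by rewrite /a0 /kk -const00 -Eg.
have [h [ih [gh hg]]] := isoG_inv ig.
case: ig => ib gD gZ _; case: ih => hb hD hZ _.
have h0 : h 0 = 0 by rewrite -(scale0r (0 : VL)) hZ !scale0r.
have iso0 : bil (LK3n n) (a0 m c kk) (a0 m c kk) = 0 by rewrite -Ea ib.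
rewrite Ba0 /a0 !pmk r2_0 r2_1 mxE in iso0.
have hc : m * m * c = (n%:Z - 1) * kk * kk.
  apply: (@mulfI _ 2) => //; apply/eqP; rewrite -subr_eq0; apply/eqP.
  by rewrite -iso0; ring.
have n1 : (n%:Z - 1) != 0 by lia.
have m0 : m != 0.
  apply/negP => /eqP m0; move/negP: anz; apply; apply/eqP.
  have k0 : kk = 0.
    move: hc; rewrite m0 !mul0r => /esym /eqP; rewrite -mulrA mulf_eq0 (negbTE n1) /=.
    by rewrite mulf_eq0 orbb => /eqP.
  rewrite -(gh alpha) Ea m0 k0 /a0 mul0r r20.
  have -> : (const_mx 0 : 'rV[int]_1) = 0 by apply/matrixP => i j; rewrite !mxE.
  by rewrite mk0 h0.
have cop : coprimez m kk.
  set gg := gcdz m kk.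
  have Em : (m %/ gg)%Z * gg = m by rewrite divzK // dvdz_gcdl.
  have Ek : (kk %/ gg)%Z * gg = kk by rewrite divzK // dvdz_gcdr.
  have : alpha = gg *: h (a0 (m %/ gg)%Z c (kk %/ gg)%Z).
    rewrite -hZ -(gh alpha) Ea; congr h.
    rewrite /a0 mkZ !scaler0 r2Z -constZ; congr mk; last by rewrite mulrC Ek.
    congr r2; first by rewrite mulrC Em.
    by rewrite mulrA [gg * _]mulrC Em.
  move/aprim => H.
  rewrite /coprimez -/gg; apply/eqP.
  by move: H; rewrite /gg /gcdz ger0_norm.
have dt : (m %| n%:Z - 1)%Z.
  have : (m %| (n%:Z - 1) * kk * kk)%Z by rewrite -hc -mulrA dvdz_mulr.
  by rewrite Gauss_dvdzl // Gauss_dvdzl.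
have md : (m %| d)%Z.
  apply: dmax => l; rewrite -ib Ea Ba0.
  have -> : kk * (2 - 2 * n%:Z) * pe (g l) 0 0 = (- 2 * kk * pe (g l) 0 0) * (n%:Z - 1).
    by ring.
  apply: rpredD; first apply: rpredD.
  - exact: dvdz_mulr (dvdzz m).
  - exact: dvdz_mulr (dvdz_mulr _ (dvdzz m)).
  - exact: dvdz_mull dt.
have dm' : (d %| m)%Z.
  have := dd (h fc); rewrite -ib hg Ea pfc /a0 pmk r2_0 //.
have dm : d = `|m|.
  have : absz d = absz m by apply/eqP; rewrite eqn_dvd -!dvdzE md dm'.
  by move=> H; rewrite -abszE -H abszE ger0_norm.
have Td : Target n d = Target n m.
  rewrite /Target; congr (osum _ (const_mx (_ / _))).
  by rewrite !expr2 -!intrM -!expr2 dm real_normK ?num_real.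
exists (fun x => f0 m kk (g x)); split; [|split; [|split]].
- by move=> x y _ _; rewrite gD f0D.
- move=> x Sx; have S0 : bil (LK3n n) (a0 m c kk) (g x) = 0 by rewrite -Ea ib.
  split.
    move=> /(f0_ker m0 cop hc S0) [j Ej]; exists j.
    by rewrite -[x]gh Ej -Ea hZ gh.
  by case=> j ->; rewrite gZ Ea f0Z f0a0 scaler0.
- move=> z; have [y [Sy Ey]] := f0_surj cop hc z.
  by exists (h y); split; [rewrite -ib hg Ea | rewrite hg].
- move=> x y Sx Sy; rewrite -ib Td. apply: (@f0_pair n m c kk m0 hc (g x) (g y)); by rewrite -Ea ib.
Qed.

Notation qi := (fun z : int => z%:~R : rat).

Lemma qi_inj (m k : nat) (x y : 'M[int]_(m, k)) : map_mx qi x = map_mx qi y -> x = y.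
Proof.
move=> H; apply/matrixP => i j; have := congr1 (fun A : 'M[rat]_(m, k) => A i j) H.
by rewrite /= !mxE => /eqP; rewrite eqr_int => /eqP.
Qed.

Lemma qiM (m k p : nat) (x : 'M[int]_(m, k)) (y : 'M[int]_(k, p)) :
  map_mx qi (x *m y) = map_mx qi x *m map_mx qi y.
Proof. exact: map_mxM. Qed.

Lemma denom (k : nat) (u : 'rV[rat]_k) :
  exists (D : int) (x : 'rV[int]_k), D != 0 /\ map_mx qi x = D%:~R *: u.
Proof.
exists (\prod_(j < k) denq (u 0 j)).
exists (\row_j (numq (u 0 j) * \prod_(i < k | i != j) denq (u 0 i))).
split; first by rewrite prodf_seq_neq0; apply/allP => j _; rewrite denq_neq0.
apply/rowP => j; rewrite !mxE.
rewrite intrM numqE [in RHS](bigD1 j) //= intrM; ring.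
Qed.

Definition Uinv := Uhyp.
Definition MukInv : 'M[int]_(8 + 8 + 2 + 2 + 2 + 2) :=
  osum (osum (osum (osum (osum E8inv E8inv) Uhyp) Uhyp) Uhyp) Uhyp.

Lemma osumM (m k : nat) (A A' : 'M[int]_m) (B B' : 'M[int]_k) :
  osum A B *m osum A' B' = osum (A *m A') (B *m B').
Proof. by rewrite /osum mulmx_block !mulmx0 !mul0mx !addr0 !add0r. Qed.
Lemma osum1 (m k : nat) : osum (1%:M : 'M[int]_m) (1%:M : 'M[int]_k) = 1%:M.
Proof. by rewrite /osum -scalar_mx_block. Qed.
Lemma UU : Uhyp *m Uhyp = 1%:M.
Proof.
apply/matrixP => i j; rewrite !mxE !big_ord_recr big_ord0 /= !mxE.
rewrite (_ : widen_ord _ _ = 0 :> 'I_2); last by apply/val_inj.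
rewrite (_ : ord_max = 1 :> 'I_2); last by apply/val_inj.
by case: i => [[|[|i]] Hi]; case: j => [[|[|j]] Hj].
Qed.
Lemma MukK : Mukai *m MukInv = 1%:M.
Proof. by rewrite /Mukai /MukInv !osumM E8invK UU !osum1. Qed.

Lemma mx11_0 (R : nzRingType) (a : 'M[R]_1) : a 0 0 = 0 -> a = 0.
Proof. by move=> H; apply/matrixP => i j; rewrite !ord1 H mxE. Qed.

Lemma rowEntry (R : Type) (m k : nat) (X : 'M[R]_(m, k)) i j : (row i X) 0 j = X i j.
Proof. by rewrite mxE. Qed.

Lemma keyLA n M v : prim_iso_emb (LK3n n) Mukai M -> orth_gen Mukai M v ->
  forall w, bil Mukai v w = 0 -> exists x, x *m M = w.
Proof.
move=> [Miso [Minj Mprim]] [Morth Mgen] w Hw.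
set A := map_mx qi M.
have rA : \rank A = (8+8+2+2+2+1)%N.
  apply/eqP; rewrite eqn_leq rank_leq_row /= leqNgt; apply/negP => lt.
  have : kermx A != 0.
    by rewrite -mxrank_eq0 mxrank_ker subn_eq0 -ltnNge.
  case/matrix0Pn => i [j Hij].
  set u := row i (kermx A).
  have uA : u *m A = 0 by rewrite /u -row_mul mulmx_ker row0.
  have [D [x [D0 Hx]]] := denom u.
  have : x *m M = 0.
    apply: qi_inj; rewrite qiM Hx -scalemxAl uA scaler0.
    by apply/matrixP => a b; rewrite !mxE.
  move/Minj => x0; move: Hx; rewrite x0.
  have -> : map_mx qi 0 = 0 :> 'rV[rat]_(8+8+2+2+2+1) by apply/matrixP => a b; rewrite !mxE.
  move/esym/eqP; rewrite scaler_eq0 intr_eq0 (negbTE D0) /= => /eqP u0.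
  have Eu : u 0 j = kermx A i j by rewrite mxE.
  by move: Hij; rewrite -Eu u0 mxE eqxx.
have v0 : v != 0.
  set C := A *m map_mx qi Mukai.
  have : kermx C^T != 0.
    rewrite -mxrank_eq0 mxrank_ker mxrank_tr subn_eq0 -ltnNge.
    by apply: leq_ltn_trans (rank_leq_row C) _.
  case/matrix0Pn => i [j Hij].
  set u := row i (kermx C^T).
  have uC : u *m C^T = 0 by rewrite /u -row_mul mulmx_ker row0.
  have [D [x [D0 Hx]]] := denom u.
  have orth : forall y, bil Mukai (y *m M) x = 0.
    move=> y; apply/eqP; rewrite -(@intr_eq0 rat).
    have -> : ((bil Mukai (y *m M) x)%:~R : rat) = (map_mx qi (y *m M *m Mukai *m x^T)) 0 0.
      by rewrite mxE.
    rewrite !qiM -map_trmx Hx -/A.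
    rewrite (_ : map_mx qi y *m A *m map_mx qi Mukai *m (D%:~R *: u)^T = 0) ?mxE //.
    have Cu : C *m u^T = 0 by rewrite -(trmxK C) -trmx_mul uC trmx0.
    rewrite -(mulmxA (map_mx qi y) A) -/C linearZ /= -scalemxAr -mulmxA Cu.
    by rewrite mulmx0 scaler0.
  have [c Hc] := Mgen x orth.
  apply/negP => /eqP v0; move: Hc; rewrite v0 scaler0 => x0.
  move: Hx; rewrite x0.
  have -> : map_mx qi 0 = 0 :> 'rV[rat]_(8+8+2+2+2+2) by apply/matrixP => a b; rewrite !mxE.
  move/esym/eqP; rewrite scaler_eq0 intr_eq0 (negbTE D0) /= => /eqP u0.
  have Eu : u 0 j = kermx C^T i j by rewrite mxE.
  by move: Hij; rewrite -Eu u0 mxE eqxx.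
set r := map_mx qi (v *m Mukai).
have r0 : r != 0.
  apply/negP => /eqP r0; move/negP: v0; apply; apply/eqP.
  have : v *m Mukai = 0.
    apply: qi_inj; rewrite -/r r0; by apply/matrixP => a b; rewrite !mxE.
  by move=> H; rewrite -[v]mulmx1 -MukK mulmxA H mul0mx.
set K := kermx r^T.
have rK : \rank K = (8+8+2+2+2+1)%N.
  rewrite /K mxrank_ker mxrank_tr.
  have : \rank r = 1%N.
    apply/eqP; rewrite eqn_leq rank_leq_row lt0n mxrank_eq0; exact: r0.
  by move=> ->.
have AK : (A <= K)%MS.
  apply/sub_kermxP.
  have -> : A *m r^T = map_mx qi (M *m (v *m Mukai)^T) by rewrite qiM map_trmx.
  have -> : M *m (v *m Mukai)^T = 0.
    apply/matrixP => i j; rewrite ord1 [in RHS]mxE.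
    have := Morth (delta_mx 0 i); rewrite /bil -rowE.
    rewrite trmx_mul Muk_sym mulmxA.
    by rewrite -!row_mul rowEntry.
  by apply/matrixP => a b; rewrite !mxE.
have KA : (K <= A)%MS by rewrite -(mxrank_leqif_sup AK).2 rA rK.
have wK : (map_mx qi w <= K)%MS.
  apply/sub_kermxP; apply: mx11_0.
  rewrite /r map_trmx -qiM mxE trmx_mul Muk_sym mulmxA.
  by rewrite -[(w *m _ *m _) 0 0]/(bil Mukai w v) (bil_sym Muk_sym) Hw.
have := submx_trans wK KA; case/submxP => y Hy.
have [D [x [D0 Hx]]] := denom y.
have : x *m M = D *: w.
  apply: qi_inj; rewrite qiM Hx -/A -scalemxAl -Hy.
  by apply/matrixP => a b; rewrite !mxE intrM.
move=> H; apply: (Mprim D w D0); by exists x.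
Qed.

Unset Implicit Arguments.
Theorem lemma4p1 (n : nat) (alpha : 'rV[int]_(8 + 8 + 2 + 2 + 2 + 1)) (d : int)
  (M : 'M[int]_(8 + 8 + 2 + 2 + 2 + 1, 8 + 8 + 2 + 2 + 2 + 2))
  (v : 'rV[int]_(8 + 8 + 2 + 2 + 2 + 2)) :
  (2 <= n)%N ->
  primitive alpha ->
  bil (LK3n n) alpha alpha = 0 ->
  is_gcd_pairing (LK3n n) alpha d ->
  prim_iso_emb (LK3n n) Mukai M ->
  orth_gen Mukai M v ->
  let beta := alpha *m M in
  iso_quot (LK3n n) (fun x => bil (LK3n n) alpha x = 0) alpha (Target n d) /\
  iso_quot Mukai (fun w => bil Mukai beta w = 0 /\ bil Mukai v w = 0) beta
    (Target n d).
Proof.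
move=> n2 prim iso gcd emb orth beta.
have P1 := part1 n2 prim iso gcd.
split; first exact: P1.
case: P1 => f [fD [fK [fS fP]]].
have emb' := emb; case: emb' => [Miso [Minj Mprim]].
have Minj' : forall x y : 'rV[int]_(8 + 8 + 2 + 2 + 2 + 1), x *m M = y *m M -> x = y.
  move=> x y H; apply/eqP; rewrite -subr_eq0; apply/eqP; apply: Minj.
  by rewrite mulmxBl H subrr.
pose pre w := epsilon (inhabits (0 : 'rV[int]_(8 + 8 + 2 + 2 + 2 + 1))) (fun x => x *m M = w).
have preS : forall w, bil Mukai v w = 0 -> pre w *m M = w.
  move=> w Hw; apply: (epsilon_spec (inhabits 0) (fun x => x *m M = w)).
  exact: keyLA emb orth w Hw.
have preA : forall w, bil Mukai beta w = 0 -> bil Mukai v w = 0 ->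
    bil (LK3n n) alpha (pre w) = 0.
  by move=> w H1 H2; rewrite -Miso preS.
exists (fun w => f (pre w)); split; [|split; [|split]].
- move=> w w' [H1 H2] [H1' H2'].
  have -> : pre (w + w') = pre w + pre w'.
    by apply: Minj'; rewrite mulmxDl !preS // bilDr H2 H2' addr0.
  by rewrite fD //; apply: preA.
- move=> w [H1 H2]; split.
    move/(fK _ (preA w H1 H2)) => [j Hj]; exists j.
    by rewrite -(preS w H2) Hj /beta scalemxAl.
  case=> j Hj; apply/(fK _ (preA w H1 H2)); exists j.
  by apply: Minj'; rewrite preS // Hj /beta scalemxAl.
- move=> z; have [x [Sx Ex]] := fS z.
  have Ov : bil Mukai v (x *m M) = 0 by rewrite (bil_sym Muk_sym) orth.1.
  exists (x *m M); split; first by split => //; rewrite /beta Miso.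
  by rewrite (Minj' (pre (x *m M)) x) ?preS.
- move=> w w' [H1 H2] [H1' H2'].
  by rewrite -(preS w H2) -(preS w' H2') Miso fP //; rewrite ?preS //; apply: preA.
Qed.
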